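(* Let $m\ge2$, $a,b\in(0,1/m)$, $f=f_{a,b}$, $X=X_{a,b}$, and let $\bar\pi\colon X\to D^{\mathbb Z}$ be defined by $\bar\pi(p)=(\kappa(\omega_n))_{n\in\mathbb Z}$ where $(\omega_n)_{n\in\mathbb Z}=\pi_{a,b}(p)$. Let $$A=\{\omega\in\Sigma_D:\liminf_{i\to\infty}H_i(\omega)=-\infty\text{ or }\liminf_{i\to-\infty}H_i(\omega)=-\infty\}.$$ Then the restriction of $\bar\pi$ to $\bar\pi^{-1}(A)$ is a homeomorphism onto its image.
   Context: $F_a(x)=\frac{x-(i-1)a}{a}$ on $[(i-1)a,ia)$, $i\in\{1,\ldots,m\}$, $F_a(x)=\frac{x-ma}{1-ma}$ on $[ma,1]$. $\Omega_i^+=[(i-1)a,ia)\times[0,1]$ for $i\le m$; $\Omega_i^+=[ma,1]\times[\frac{i-m-1}{m},\frac{i-m}{m})$ for $m+1\le i\le2m-1$; $\Omega_{2m}^+=[ma,1]\times[\frac{m-1}{m},1]$. $f_a(x,y)=(F_a(x),\frac{y}{m}+\frac{i-1}{m})$ on $\Omega_i^+$ for $i\le m$, $f_a(x,y)=(F_a(x),my-i+m+1)$ on $\Omega_i^+$ for $i\ge m+1$. $\Omega_i=\Omega_i^+\times[0,1]$, $f_{a,b}(x,y,z)=(f_a(x,y),(1-mb)z)$ on $\Omega_i$ for $i\le m$, $f_{a,b}(x,y,z)=(f_a(x,y),bz+1-mb+b(i-m-1))$ on $\Omega_i$ for $i\ge m+1$ (a bijection of $[0,1]^3$). $X_{a,b}=\bigcap_{n\in\mathbb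 Z}f_{a,b}^{-n}(\bigcup_i\mathrm{int}\,\Omega_i)$ with the subspace topology of $\mathbb R^3$, and $\pi_{a,b}(p)=(\omega_n)_{n\in\mathbb Z}$ with $f_{a,b}^n(p)\in\mathrm{int}\,\Omega_{\omega_n}$. $D=\{\alpha_1,\ldots,\alpha_m,\beta_1,\ldots,\beta_m\}$, $\kappa(i)=\alpha_i$, $\kappa(i+m)=\beta_i$ for $i\le m$; $D^{\mathbb Z}$ has the product topology. $\Sigma_D=\{\omega\in D^{\mathbb Z}:\mathrm{red}(\omega_i\cdots\omega_j)\ne0\ \forall i<j\}$, where $\mathrm{red}$ evaluates a word in the monoid with zero generated by $D$ and unit $1$ with relations $\alpha_i\cdot\beta_j=\delta_{i,j}$, $0\cdot0=0$, $\gamma\cdot1=1\cdot\gamma=\gamma$, $\gamma\cdot0=0\cdot\gamma=0$ (the image of $\bar\pi$ lies in $\Sigma_D$). For $\omega\in\Sigma_D$: $H_0(\omega)=0$; for $i\ge1$, $H_i(\omega)$ is the number of $j\in\{0,\ldots,i-1\}$ with $\omega_j\in\{\alpha_1,\ldots,\alpha_m\}$ minus the number with $\omega_j\in\{\beta_1,\ldots,\beta_m\}$; for $i\le-1$, $H_i(\omega)$ is the number of $j\in\{i,\ldots,-1\}$ with $\omega_j\in\{\beta_1,\ldots,\beta_m\}$ minus the number with $\omega_j\in\{\alpha_1,\ldots,\alpha_m\}$. *)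

(* Defs.v *)
From Stdlib Require Import Reals ZArith List Lia ClassicalEpsilon.
From Coquelicot Require Import Coquelicot.
Import ListNotations.
Open Scope R_scope.

Record P3 := mkP { px : R; py : R; pz : R }.

Definition dist3 (p q : P3) : R :=
  sqrt ((px p - px q) ^ 2 + (py p - py q) ^ 2 + (pz p - pz q) ^ 2).

Definition intR3 (S : P3 -> Prop) (p : P3) : Prop :=
  exists e, 0 < e /\ forall q, dist3 p q < e -> S q.

Definition Omega (m : nat) (a : R) (i : nat) (p : P3) : Prop :=
  let M := INR m in
  0 <= pz p <= 1 /\
  (((1 <= i <= m)%nat /\
      (INR i - 1) * a <= px p < INR i * a /\ 0 <= py p <= 1)
   \/ ((m + 1 <= i <= 2 * m - 1)%nat /\
      M * a <= px p <= 1 /\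
      (INR i - M - 1) / M <= py p < (INR i - M) / M)
   \/ (i = (2 * m)%nat /\
      M * a <= px p <= 1 /\ (M - 1) / M <= py p <= 1)).

Definition f_piece (m : nat) (a b : R) (i : nat) (p : P3) : P3 :=
  let M := INR m in
  if Nat.leb i m then
    mkP ((px p - (INR i - 1) * a) / a)
        (py p / M + (INR i - 1) / M)
        ((1 - M * b) * pz p)
  else
    mkP ((px p - M * a) / (1 - M * a))
        (M * py p - INR i + M + 1)
        (b * pz p + 1 - M * b + b * (INR i - M - 1)).

(** Graph of f_{a,b}: f p = p' (the Omega_i are disjoint and cover [0,1]^3). *)
Definition f_graph (m : nat) (a b : R) (p p' : P3) : Prop :=
  exists i, (1 <= i <= 2 * m)%nat /\ Omega m a i p /\ p' = f_piece m a b i p.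

(** A full orbit (q n = f^n (q 0), n in Z); since f is a bijection of [0,1]^3
    this is exactly the two-sided orbit of q 0. *)
Definition orbit (m : nat) (a b : R) (q : Z -> P3) : Prop :=
  forall n : Z, f_graph m a b (q n) (q (n + 1)%Z).

(** X_{a,b} = intersection over n in Z of f^{-n}(union_i int Omega_i). *)
Definition X (m : nat) (a b : R) (p : P3) : Prop :=
  exists q : Z -> P3, orbit m a b q /\ q 0%Z = p /\
    forall n, exists i, (1 <= i <= 2 * m)%nat /\ intR3 (Omega m a i) (q n).

Definition pi_rel (m : nat) (a b : R) (p : P3) (w : Z -> nat) : Prop :=
  exists q : Z -> P3, orbit m a b q /\ q 0%Z = p /\
    forall n, (1 <= w n <= 2 * m)%nat /\ intR3 (Omega m a (w n)) (q n).

Definition pi_ab (m : nat) (a b : R) (p : P3) : Z -> nat :=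
  epsilon (inhabits (fun _ : Z => 0%nat)) (pi_rel m a b p).

Inductive D : Type := Alpha (i : nat) | Beta (i : nat).

Definition inD (m : nat) (d : D) : Prop :=
  match d with Alpha i | Beta i => (1 <= i <= m)%nat end.

Definition kappa (m : nat) (i : nat) : D :=
  if Nat.leb i m then Alpha i else Beta (i - m).

Definition pibar (m : nat) (a b : R) (p : P3) : Z -> D :=
  fun n => kappa m (pi_ab m a b p n).

(** Evaluation in the monoid with zero generated by D with alpha_i beta_j =
    delta_ij.  Nonzero elements have the normal form
    beta_{j1} ... beta_{jk} alpha_{i1} ... alpha_{il}; we store
    (list of beta indices, stack of alpha indices with the last one on top);
    None represents 0. *)
Definition red_step (s : option (list nat * list nat)) (d : D)
  : option (list nat * list nat) :=
  match s with
  | None => None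
  | Some (bs, al) =>
      match d with
      | Alpha i => Some (bs, i :: al)
      | Beta j =>
          match al with
          | [] => Some (bs ++ [j], [])
          | i :: r => if Nat.eqb i j then Some (bs, r) else None
          end
      end
  end.

Definition red (w : list D) : option (list nat * list nat) :=
  fold_left red_step w (Some ([], [])).

Definition word (w : Z -> D) (i j : Z) : list D :=
  map (fun k => w (i + Z.of_nat k)%Z) (seq 0 (Z.to_nat (j - i + 1))).

Definition Sigma_D (m : nat) (w : Z -> D) : Prop :=
  (forall n, inD m (w n)) /\
  (forall i j : Z, (i < j)%Z -> red (word w i j) <> None).

Definition sgnD (d : D) : Z := match d with Alpha _ => 1%Z | Beta _ => (-1)%Z end.

Fixpoint sumZ (g : nat -> Z) (n : nat) : Z :=
  match n with O => 0%Z | S k => (sumZ g k + g k)%Z end.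

Definition H (w : Z -> D) (i : Z) : Z :=
  if Z.leb 0 i then sumZ (fun k => sgnD (w (Z.of_nat k))) (Z.to_nat i)
  else (- sumZ (fun k => sgnD (w (i + Z.of_nat k)%Z)) (Z.to_nat (- i)))%Z.

Definition A_set (m : nat) (w : Z -> D) : Prop :=
  Sigma_D m w /\
  (LimInf_seq (fun n => IZR (H w (Z.of_nat n))) = m_infty \/
   LimInf_seq (fun n => IZR (H w (- Z.of_nat n)%Z)) = m_infty).

(** Homeomorphism onto its image, for g : B -> D^Z with B ⊆ R^3 carrying the
    subspace (Euclidean) topology and D^Z the product of discrete topologies
    (basic open sets: cylinders fixing the coordinates |n| <= N). *)
Definition homeo_onto_image (B : P3 -> Prop) (g : P3 -> Z -> D) : Prop :=
  (forall p p', B p -> B p' -> (forall n, g p n = g p' n) -> p = p') /\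
  (forall p, B p -> forall N : nat, exists d, 0 < d /\
     forall p', B p' -> dist3 p p' < d ->
       forall n, (Z.abs n <= Z.of_nat N)%Z -> g p' n = g p n) /\
  (forall p, B p -> forall e, 0 < e -> exists N : nat,
     forall p', B p' ->
       (forall n, (Z.abs n <= Z.of_nat N)%Z -> g p' n = g p n) ->
       dist3 p p' < e).

(* Main.v *)
Require Import Defs.
From Stdlib Require Import Reals ZArith List Lia Lra ClassicalEpsilon.
From Coquelicot Require Import Coquelicot.
Open Scope R_scope.

Definition cls (e : R) (u v : P3) :=
  Rabs (px u - px v) < e /\ Rabs (py u - py v) < e /\ Rabs (pz u - pz v) < e.

Lemma coord_le_dist (x y z : R) : Rabs x <= sqrt (x ^ 2 + y ^ 2 + z ^ 2).
Proof.
  rewrite <- sqrt_Rsqr_abs. apply sqrt_le_1_alt. unfold Rsqr.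
  assert (0 <= y ^ 2) by apply pow2_ge_0. assert (0 <= z ^ 2) by apply pow2_ge_0.
  simpl in *. lra.
Qed.

Lemma close_dist e u v : dist3 u v < e -> cls e u v.
Proof.
  unfold dist3, cls; intros H.
  pose proof (coord_le_dist (px u - px v) (py u - py v) (pz u - pz v)).
  pose proof (coord_le_dist (py u - py v) (px u - px v) (pz u - pz v)).
  pose proof (coord_le_dist (pz u - pz v) (py u - py v) (px u - px v)).
  replace ((py u - py v) ^ 2 + (px u - px v) ^ 2 + (pz u - pz v) ^ 2)
    with ((px u - px v) ^ 2 + (py u - py v) ^ 2 + (pz u - pz v) ^ 2) in H1 by ring.
  replace ((pz u - pz v) ^ 2 + (py u - py v) ^ 2 + (px u - px v) ^ 2)
    with ((px u - px v) ^ 2 + (py u - py v) ^ 2 + (pz u - pz v) ^ 2) in H2 by ring.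
  lra.
Qed.

Lemma sq_lt x e : Rabs x < e -> x ^ 2 < e ^ 2.
Proof.
  intros H. rewrite <- pow2_abs. pose proof (Rabs_pos x).
  simpl. rewrite !Rmult_1_r. apply Rmult_le_0_lt_compat; lra.
Qed.

Lemma dist_close e u v : cls (e / 3) u v -> dist3 u v < e.
Proof.
  unfold dist3, cls; intros [H1 [H2 H3]].
  assert (He : 0 < e) by (pose proof (Rabs_pos (px u - px v)); lra).
  apply sq_lt in H1; apply sq_lt in H2; apply sq_lt in H3.
  rewrite <- (sqrt_pow2 e) by lra.
  apply sqrt_lt_1_alt. split.
  - pose proof (pow2_ge_0 (px u - px v)); pose proof (pow2_ge_0 (py u - py v));
    pose proof (pow2_ge_0 (pz u - pz v)); lra.
  - pose proof (pow2_ge_0 (px u - px v)). replace ((e/3)^2) with (e^2/9) in * by field. lra.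
Qed.

Lemma close_mono e e' u v : e <= e' -> cls e u v -> cls e' u v.
Proof. unfold cls; intros He [H1 [H2 H3]]; repeat split; lra. Qed.

Lemma close_sym e u v : cls e u v -> cls e v u.
Proof.
  unfold cls; intros [H1 [H2 H3]].
  rewrite (Rabs_minus_sym (px v)), (Rabs_minus_sym (py v)), (Rabs_minus_sym (pz v)). auto.
Qed.

Lemma close_trans e1 e2 u v w : cls e1 u v -> cls e2 v w -> cls (e1 + e2) u w.
Proof.
  unfold cls; intros [H1 [H2 H3]] [G1 [G2 G3]].
  repeat split.
  - replace (px u - px w) with ((px u - px v) + (px v - px w)) by ring.
    pose proof (Rabs_triang (px u - px v) (px v - px w)); lra.
  - replace (py u - py w) with ((py u - py v) + (py v - py w)) by ring.
    pose proof (Rabs_triang (py u - py v) (py v - py w)); lra.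
  - replace (pz u - pz w) with ((pz u - pz v) + (pz v - pz w)) by ring.
    pose proof (Rabs_triang (pz u - pz v) (pz v - pz w)); lra.
Qed.

Lemma dist_self u : dist3 u u = 0.
Proof.
  unfold dist3. replace ((px u - px u) ^ 2 + (py u - py u) ^ 2 + (pz u - pz u) ^ 2) with 0 by ring.
  apply sqrt_0.
Qed.

Lemma int_mem S u : intR3 S u -> S u.
Proof. intros [e [He H]]. apply H. rewrite dist_self. auto. Qed.

Lemma int_transfer S v : intR3 S v -> exists r, 0 < r /\ forall u, cls r v u -> intR3 S u.
Proof.
  intros [e [He H]]. exists (e / 6). split; [lra|].
  intros u Hu. exists (e / 6). split; [lra|]. intros z Hz.
  apply H. apply dist_close. apply close_dist in Hz.
  apply close_mono with (e/6 + e/6); [lra|]. eapply close_trans; eauto.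
Qed.

Definition params (m : nat) (a b : R) :=
  (2 <= m)%nat /\ 0 < a /\ INR m * a < 1 /\ 0 < b /\ INR m * b < 1.

Lemma params_M m a b : params m a b -> 2 <= INR m.
Proof. intros [H _]. apply le_INR in H. simpl in H. lra. Qed.

Lemma nat_eq_INR i j : INR i < INR j + 1 -> INR j < INR i + 1 -> i = j.
Proof.
  intros H1 H2. rewrite <- S_INR in H1, H2. apply INR_lt in H1. apply INR_lt in H2. lia.
Qed.

Lemma divle M c y : 0 < M -> c / M <= y -> c <= y * M.
Proof. intros HM H. replace c with ((c / M) * M) by (field; lra). nra. Qed.
Lemma divlt M c y : 0 < M -> y < c / M -> y * M < c.
Proof. intros HM H. replace c with ((c / M) * M) by (field; lra). nra. Qed.

Lemma INR_le' i j : (i <= j)%nat -> INR i <= INR j.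
Proof. apply le_INR. Qed.

Ltac natR H := apply le_INR in H; rewrite ?plus_INR, ?mult_INR in H; simpl in H.

Lemma Omega_bounds m a b i u : params m a b -> (1 <= i <= 2 * m)%nat ->
  Omega m a i u -> 0 <= px u <= 1 /\ 0 <= py u <= 1 /\ 0 <= pz u <= 1.
Proof.
  intros Hp Hi H. pose proof (params_M _ _ _ Hp) as HM.
  destruct Hp as [_ [Ha [HMa [Hb HMb]]]].
  destruct H as [Hz [[Hr [Hx Hy]] | [[Hr [Hx Hy]] | [Hr [Hx Hy]]]]].
  - assert (H1 : (1 <= i)%nat) by lia. assert (H2 : (i <= m)%nat) by lia.
    natR H1. natR H2. split; [split; nra|]. lra.
  - assert (H1 : (m + 1 <= i)%nat) by lia. assert (H2 : (i + 1 <= 2 * m)%nat) by lia.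
    natR H1. natR H2. destruct Hy as [Hy1 Hy2].
    apply divle in Hy1; [|lra]. apply divlt in Hy2; [|lra].
    split; [split; nra|]. split; [|lra]. split; nra.
  - destruct Hy as [Hy1 Hy2]. apply divle in Hy1; [|lra]. split; [split; nra|]. split; [|lra].
    split; nra.
Qed.

Lemma Omega_disj m a b i j u : params m a b -> (1 <= i <= 2 * m)%nat -> (1 <= j <= 2 * m)%nat ->
  Omega m a i u -> Omega m a j u -> i = j.
Proof.
  intros Hp Hi Hj H G. pose proof (params_M _ _ _ Hp) as HM.
  destruct Hp as [_ [Ha [HMa [Hb HMb]]]].
  destruct H as [Hz [[Hr [Hx Hy]] | [[Hr [Hx Hy]] | [Hr [Hx Hy]]]]];
  destruct G as [Gz [[Gr [Gx Gy]] | [[Gr [Gx Gy]] | [Gr [Gx Gy]]]]]; try lia.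
  - apply nat_eq_INR; nra.
  - assert (H2 : (i <= m)%nat) by lia. natR H2. nra.
  - assert (H2 : (i <= m)%nat) by lia. natR H2. nra.
  - assert (H2 : (j <= m)%nat) by lia. natR H2. nra.
  - destruct Hy as [Hy1 Hy2]; destruct Gy as [Gy1 Gy2].
    apply divle in Hy1; [|lra]. apply divlt in Hy2; [|lra].
    apply divle in Gy1; [|lra]. apply divlt in Gy2; [|lra].
    apply nat_eq_INR; lra.
  - assert (H2 : (i + 1 <= 2 * m)%nat) by lia. natR H2.
    destruct Hy as [Hy1 Hy2]; destruct Gy as [Gy1 Gy2].
    apply divlt in Hy2; [|lra]. apply divle in Gy1; [|lra]. lra.
  - assert (H2 : (j <= m)%nat) by lia. natR H2. nra.
  - assert (H2 : (j + 1 <= 2 * m)%nat) by lia. natR H2.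
    destruct Hy as [Hy1 Hy2]; destruct Gy as [Gy1 Gy2].
    apply divlt in Gy2; [|lra]. apply divle in Hy1; [|lra]. lra.
Qed.

Lemma int_strict m a b i u : params m a b -> (1 <= i <= 2 * m)%nat ->
  intR3 (Omega m a i) u -> 0 < px u < 1 /\ 0 < py u < 1 /\ 0 < pz u < 1.
Proof.
  intros Hp Hi Hint.
  assert (Hsh : forall t1 t2 t3, Rabs t1 < 1 -> Rabs t2 < 1 -> Rabs t3 < 1 ->
     exists e, 0 < e /\ Omega m a i (mkP (px u + e * t1) (py u + e * t2) (pz u + e * t3))).
  { destruct Hint as [e [He H]]. intros t1 t2 t3 H1 H2 H3. exists (e / 4). split; [lra|].
    apply H. apply dist_close. unfold cls; cbn [px py pz].
    replace (px u - (px u + e / 4 * t1)) with (- (e/4 * t1)) by ring.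
    replace (py u - (py u + e / 4 * t2)) with (- (e/4 * t2)) by ring.
    replace (pz u - (pz u + e / 4 * t3)) with (- (e/4 * t3)) by ring.
    rewrite !Rabs_Ropp, !Rabs_mult, !(Rabs_pos_eq (e/4)) by lra.
    repeat split; nra. }
  assert (Hhalf : Rabs (1/2) < 1) by (rewrite Rabs_pos_eq; lra).
  assert (Hmhalf : Rabs (-(1/2)) < 1) by (rewrite Rabs_Ropp, Rabs_pos_eq; lra).
  destruct (Hsh _ _ _ Hhalf Hhalf Hhalf) as [e1 [He1 H1]].
  destruct (Hsh _ _ _ Hmhalf Hmhalf Hmhalf) as [e2 [He2 H2]].
  apply (Omega_bounds m a b) in H1; auto. apply (Omega_bounds m a b) in H2; auto.
  simpl in *. lra.
Qed.

Definition g_piece (m : nat) (a b : R) (i : nat) (P : P3) : P3 :=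
  let M := INR m in
  if Nat.leb i m then
    mkP (a * px P + (INR i - 1) * a) (M * py P - (INR i - 1)) (pz P / (1 - M * b))
  else
    mkP ((1 - M * a) * px P + M * a) ((py P + INR i - M - 1) / M)
        ((pz P - 1 + M * b - b * (INR i - M - 1)) / b).

Lemma params_nz m a b : params m a b ->
  a <> 0 /\ b <> 0 /\ INR m <> 0 /\ 1 - INR m * a <> 0 /\ 1 - INR m * b <> 0.
Proof.
  intros Hp. pose proof (params_M _ _ _ Hp). destruct Hp as [_ [Ha [HMa [Hb HMb]]]].
  repeat split; lra.
Qed.

Lemma fg m a b i P : params m a b -> f_piece m a b i (g_piece m a b i P) = P.
Proof.
  intros Hp. destruct (params_nz _ _ _ Hp) as [Ha [Hb [HM [HMa HMb]]]].
  unfold f_piece, g_piece. destruct P as [x y z]. destruct (Nat.leb i m); cbn [px py pz];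
  f_equal; field; auto.
Qed.

Lemma gf m a b i P : params m a b -> g_piece m a b i (f_piece m a b i P) = P.
Proof.
  intros Hp. destruct (params_nz _ _ _ Hp) as [Ha [Hb [HM [HMa HMb]]]].
  unfold f_piece, g_piece. destruct P as [x y z]. destruct (Nat.leb i m); cbn [px py pz];
  f_equal; field; auto.
Qed.

Definition cx m a i := if Nat.leb i m then / a else / (1 - INR m * a).
Definition cy m i := if Nat.leb i m then / INR m else INR m.
Definition cz m b i := if Nat.leb i m then 1 - INR m * b else b.

Lemma f_diff m a b i u v : params m a b ->
  px (f_piece m a b i u) - px (f_piece m a b i v) = cx m a i * (px u - px v) /\
  py (f_piece m a b i u) - py (f_piece m a b i v) = cy m i * (py u - py v) /\
  pz (f_piece m a b i u) - pz (f_piece m a b i v) = cz m b i * (pz u - pz v).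
Proof.
  intros Hp. destruct (params_nz _ _ _ Hp) as [Ha [Hb [HM [HMa HMb]]]].
  unfold f_piece, cx, cy, cz. destruct (Nat.leb i m); cbn [px py pz];
  repeat split; field; auto.
Qed.

Lemma g_diff m a b i u v : params m a b ->
  px (g_piece m a b i u) - px (g_piece m a b i v) = / cx m a i * (px u - px v) /\
  py (g_piece m a b i u) - py (g_piece m a b i v) = / cy m i * (py u - py v) /\
  pz (g_piece m a b i u) - pz (g_piece m a b i v) = / cz m b i * (pz u - pz v).
Proof.
  intros Hp. destruct (params_nz _ _ _ Hp) as [Ha [Hb [HM [HMa HMb]]]].
  unfold g_piece, cx, cy, cz. destruct (Nat.leb i m); cbn [px py pz];
  repeat split; field; auto.
Qed.

Definition Lc m a b := / a + / (1 - INR m * a) + INR m + / (1 - INR m * b) + / b + 2.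

Lemma Lc_bounds m a b i : params m a b ->
  0 < Lc m a b /\
  Rabs (cx m a i) <= Lc m a b /\ Rabs (cy m i) <= Lc m a b /\ Rabs (cz m b i) <= Lc m a b /\
  Rabs (/ cx m a i) <= Lc m a b /\ Rabs (/ cy m i) <= Lc m a b /\ Rabs (/ cz m b i) <= Lc m a b.
Proof.
  intros Hp. pose proof (params_M _ _ _ Hp) as HM. destruct Hp as [_ [Ha [HMa [Hb HMb]]]].
  assert (0 < / a) by (apply Rinv_0_lt_compat; lra).
  assert (0 < / b) by (apply Rinv_0_lt_compat; lra).
  assert (0 < / (1 - INR m * a)) by (apply Rinv_0_lt_compat; lra).
  assert (0 < / (1 - INR m * b)) by (apply Rinv_0_lt_compat; lra).
  assert (0 < / INR m) by (apply Rinv_0_lt_compat; lra).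
  assert (/ INR m <= 1).
  { rewrite <- Rinv_1. apply Rinv_le_contravar; lra. }
  unfold Lc, cx, cy, cz. destruct (Nat.leb i m); rewrite ?Rinv_inv;
  repeat rewrite Rabs_pos_eq by (try apply Rlt_le, Rinv_0_lt_compat; nra);
  repeat split; nra.
Qed.

Lemma cls_scale e L cx0 cy0 cz0 u v u' v' : 0 < L ->
  Rabs cx0 <= L -> Rabs cy0 <= L -> Rabs cz0 <= L ->
  px u' - px v' = cx0 * (px u - px v) ->
  py u' - py v' = cy0 * (py u - py v) ->
  pz u' - pz v' = cz0 * (pz u - pz v) ->
  cls e u v -> cls (L * e) u' v'.
Proof.
  intros HL H1 H2 H3 E1 E2 E3 [G1 [G2 G3]]. unfold cls.
  rewrite E1, E2, E3, !Rabs_mult.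
  pose proof (Rabs_pos cx0); pose proof (Rabs_pos cy0); pose proof (Rabs_pos cz0).
  pose proof (Rabs_pos (px u - px v)); pose proof (Rabs_pos (py u - py v));
  pose proof (Rabs_pos (pz u - pz v)).
  repeat split; nra.
Qed.

Lemma f_lip m a b i e u v : params m a b -> cls e u v ->
  cls (Lc m a b * e) (f_piece m a b i u) (f_piece m a b i v).
Proof.
  intros Hp H. destruct (Lc_bounds m a b i Hp) as [H0 [H1 [H2 [H3 _]]]].
  destruct (f_diff m a b i u v Hp) as [E1 [E2 E3]].
  apply (cls_scale e _ (cx m a i) (cy m i) (cz m b i) u v); auto.
Qed.

Lemma g_lip m a b i e u v : params m a b -> cls e u v ->
  cls (Lc m a b * e) (g_piece m a b i u) (g_piece m a b i v).
Proof.
  intros Hp H. destruct (Lc_bounds m a b i Hp) as [H0 [_ [_ [_ [H1 [H2 H3]]]]]].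
  destruct (g_diff m a b i u v Hp) as [E1 [E2 E3]].
  apply (cls_scale e _ (/ cx m a i) (/ cy m i) (/ cz m b i) u v); auto.
Qed.

Lemma f_inj_same m a b i u v : params m a b ->
  f_piece m a b i u = f_piece m a b i v -> u = v.
Proof.
  intros Hp E. rewrite <- (gf m a b i u Hp), <- (gf m a b i v Hp), E. reflexivity.
Qed.

Lemma f_inj m a b i j u v : params m a b -> (1 <= i <= 2 * m)%nat -> (1 <= j <= 2 * m)%nat ->
  intR3 (Omega m a i) u -> intR3 (Omega m a j) v ->
  f_piece m a b i u = f_piece m a b j v -> i = j.
Proof.
  intros Hp Hi Hj Hu Hv E.
  apply (int_strict m a b) in Hu; auto. apply (int_strict m a b) in Hv; auto.
  pose proof (params_M _ _ _ Hp) as HM.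
  destruct (params_nz _ _ _ Hp) as [Ha0 [Hb0 [HM0 [HMa0 HMb0]]]].
  destruct Hp as [_ [Ha [HMa [Hb HMb]]]].
  assert (Ey := f_equal py E). assert (Ez := f_equal pz E).
  unfold f_piece in Ey, Ez.
  destruct (Nat.leb i m) eqn:Ei; destruct (Nat.leb j m) eqn:Ej; cbn [px py pz] in Ey, Ez.
  - assert (py u + INR i = py v + INR j).
    { replace (py u + INR i) with (INR m * (py u / INR m + (INR i - 1) / INR m) + 1)
        by (field; auto).
      rewrite Ey. field; auto. }
    apply nat_eq_INR; lra.
  - apply Nat.leb_gt in Ej. assert (Hj' : (m + 1 <= j)%nat) by lia. natR Hj'.
    assert (b * (INR j - INR m - 1) >= 0) by nra. nra.
  - apply Nat.leb_gt in Ei. assert (Hi' : (m + 1 <= i)%nat) by lia. natR Hi'.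
    assert (b * (INR i - INR m - 1) >= 0) by nra. nra.
  - assert (pz u + INR i = pz v + INR j).
    { apply Rmult_eq_reg_l with b; auto.
      replace (b * (pz u + INR i)) with
        (b * pz u + 1 - INR m * b + b * (INR i - INR m - 1) - 1 + INR m * b + b * INR m + b)
        by ring.
      rewrite Ez. ring. }
    apply nat_eq_INR; lra.
Qed.

Definition dat m a b p (q : Z -> P3) (w : Z -> nat) :=
  orbit m a b q /\ q 0%Z = p /\
  forall n, (1 <= w n <= 2 * m)%nat /\ intR3 (Omega m a (w n)) (q n).

Lemma orbit_step m a b q i n : params m a b -> orbit m a b q -> (1 <= i <= 2 * m)%nat ->
  intR3 (Omega m a i) (q n) -> q (n + 1)%Z = f_piece m a b i (q n).
Proof.
  intros Hp Ho Hi Hint. destruct (Ho n) as [j [Hj [Hom E]]].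
  assert (i = j) by (apply (Omega_disj m a b i j (q n)); auto; apply int_mem; auto).
  subst; auto.
Qed.


Lemma X_dat m a b p : X m a b p -> exists q, dat m a b p q (pi_ab m a b p).
Proof.
  intros [q [Ho [H0 Hn]]].
  set (w := fun n => epsilon (inhabits 0%nat)
                 (fun i => (1 <= i <= 2 * m)%nat /\ intR3 (Omega m a i) (q n))).
  assert (Hw : pi_rel m a b p w).
  { exists q. split; [auto|]. split; [auto|]. intros n. unfold w.
    apply (epsilon_spec (inhabits 0%nat) (fun i => (1 <= i <= 2 * m)%nat /\ intR3 (Omega m a i) (q n))).
    apply Hn. }
  assert (Hpi : pi_rel m a b p (pi_ab m a b p)).
  { unfold pi_ab. apply epsilon_spec. exists w; auto. }
  destruct Hpi as [q' Hq']. exists q'. exact Hq'.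
Qed.

Lemma code_eq m a b i u : params m a b -> (1 <= i <= 2 * m)%nat -> intR3 (Omega m a i) u ->
  exists r, 0 < r /\ forall v j, (1 <= j <= 2 * m)%nat -> intR3 (Omega m a j) v ->
    cls r u v -> i = j.
Proof.
  intros Hp Hi Hu. destruct (int_transfer _ _ Hu) as [r [Hr H]].
  exists r. split; auto. intros v j Hj Hv Hc.
  apply (Omega_disj m a b i j v); auto; apply int_mem; auto.
Qed.

Lemma Lc_pos m a b : params m a b -> 0 < Lc m a b.
Proof. intros Hp. apply (Lc_bounds m a b 0 Hp). Qed.

Lemma fwd m a b p q w : params m a b -> dat m a b p q w -> forall k : nat, forall e, 0 < e ->
  exists d, 0 < d /\ forall p' q' w', dat m a b p' q' w' -> dist3 p p' < d ->
    cls e (q (Z.of_nat k)) (q' (Z.of_nat k)).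
Proof.
  intros Hp [Ho [H0 Hn]]. induction k as [|k IH]; intros e He.
  - exists e. split; auto. intros p' q' w' [Ho' [H0' Hn']] Hd. simpl. rewrite H0, H0'.
    apply close_dist; auto.
  - destruct (Hn (Z.of_nat k)) as [Hwk Hik].
    destruct (code_eq m a b _ _ Hp Hwk Hik) as [r [Hr Hcode]].
    pose proof (Lc_pos m a b Hp) as HL.
    assert (He' : 0 < Rmin r (e / Lc m a b)).
    { apply Rmin_pos; auto. apply Rdiv_lt_0_compat; auto. }
    destruct (IH _ He') as [d [Hd Hcl]]. exists d. split; auto.
    intros p' q' w' Hdat Hpp. pose proof (Hcl _ _ _ Hdat Hpp) as Hc.
    destruct Hdat as [Ho' [H0' Hn']].
    destruct (Hn' (Z.of_nat k)) as [Hwk' Hik'].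
    assert (Eq : w (Z.of_nat k) = w' (Z.of_nat k)).
    { apply (Hcode (q' (Z.of_nat k))); auto. eapply close_mono; [|exact Hc]. apply Rmin_l. }
    replace (Z.of_nat (S k)) with (Z.of_nat k + 1)%Z by lia.
    rewrite (orbit_step m a b q (w (Z.of_nat k)) _ Hp Ho Hwk Hik).
    rewrite (orbit_step m a b q' (w' (Z.of_nat k)) _ Hp Ho' Hwk' Hik').
    rewrite <- Eq.
    eapply close_mono; [|apply f_lip; eauto].
    assert (Rmin r (e / Lc m a b) <= e / Lc m a b) by apply Rmin_r.
    replace e with (Lc m a b * (e / Lc m a b)) at 2 by (field; lra).
    apply Rmult_le_compat_l; lra.
Qed.

Lemma bwd m a b p q w : params m a b -> dat m a b p q w -> forall k : nat, forall e, 0 < e ->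
  exists d, 0 < d /\ forall p' q' w', dat m a b p' q' w' -> dist3 p p' < d ->
    cls e (q (- Z.of_nat k)%Z) (q' (- Z.of_nat k)%Z).
Proof.
  intros Hp [Ho [H0 Hn]]. induction k as [|k IH]; intros e He.
  - exists e. split; auto. intros p' q' w' [Ho' [H0' Hn']] Hd. simpl. rewrite H0, H0'.
    apply close_dist; auto.
  - set (n1 := (- Z.of_nat (S k))%Z).
    assert (En : (n1 + 1 = - Z.of_nat k)%Z) by (unfold n1; lia).
    destruct (Hn n1) as [Hwk Hik].
    destruct (int_transfer _ _ Hik) as [r [Hr Htr]].
    pose proof (Lc_pos m a b Hp) as HL.
    assert (He' : 0 < Rmin r e / Lc m a b).
    { apply Rdiv_lt_0_compat; auto. apply Rmin_pos; auto. }
    destruct (IH _ He') as [d [Hd Hcl]]. exists d. split; auto.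
    intros p' q' w' Hdat Hpp. pose proof (Hcl _ _ _ Hdat Hpp) as Hc.
    destruct Hdat as [Ho' [H0' Hn']].
    destruct (Hn' n1) as [Hwk' Hik'].
    pose proof (orbit_step m a b q _ _ Hp Ho Hwk Hik) as E1.
    pose proof (orbit_step m a b q' _ _ Hp Ho' Hwk' Hik') as E2.
    rewrite En in E1, E2.
    set (u := g_piece m a b (w n1) (q' (- Z.of_nat k)%Z)).
    assert (Hcu : cls (Rmin r e) (q n1) u).
    { replace (q n1) with (g_piece m a b (w n1) (q (- Z.of_nat k)%Z))
        by (rewrite E1; apply gf; auto).
      replace (Rmin r e) with (Lc m a b * (Rmin r e / Lc m a b)) by (field; lra).
      apply g_lip; auto. }
    assert (Hiu : intR3 (Omega m a (w n1)) u).
    { apply Htr. eapply close_mono; [|exact Hcu]. apply Rmin_l. }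
    assert (Hfu : f_piece m a b (w n1) u = f_piece m a b (w' n1) (q' n1)).
    { unfold u. rewrite fg by auto. auto. }
    assert (Eij : w n1 = w' n1) by (eapply f_inj; eauto).
    rewrite <- Eij in Hfu. apply f_inj_same in Hfu; auto.
    rewrite <- Hfu. eapply close_mono; [|exact Hcu]. apply Rmin_r.
Qed.

Lemma codes m a b p q w : params m a b -> dat m a b p q w -> forall N : nat,
  exists d, 0 < d /\ forall p' q' w', dat m a b p' q' w' -> dist3 p p' < d ->
    forall n, (Z.abs n <= Z.of_nat N)%Z -> w' n = w n.
Proof.
  intros Hp Hd.
  assert (Hat : forall n, exists r, 0 < r /\ forall p' q' w', dat m a b p' q' w' ->
            cls r (q n) (q' n) -> w' n = w n).
  { intros n. destruct Hd as [Ho [H0 Hn]]. destruct (Hn n) as [Hw Hi].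
    destruct (code_eq m a b _ _ Hp Hw Hi) as [r [Hr Hc]]. exists r. split; auto.
    intros p' q' w' [Ho' [H0' Hn']] Hcl. destruct (Hn' n).
    symmetry. eapply Hc; eauto. }
  induction N as [|N IH].
  - destruct (Hat 0%Z) as [r [Hr Hc]]. destruct (fwd m a b p q w Hp Hd 0 r Hr) as [d [Hd0 Hf]].
    exists d. split; auto. intros p' q' w' Hd' Hpp n Hn.
    assert (n = 0%Z) by lia. subst n. apply (Hc p' q' w' Hd'). apply (Hf p' q' w' Hd' Hpp).
  - destruct IH as [d0 [Hd0 H0]].
    destruct (Hat (Z.of_nat (S N))) as [r1 [Hr1 Hc1]].
    destruct (Hat (- Z.of_nat (S N))%Z) as [r2 [Hr2 Hc2]].
    destruct (fwd m a b p q w Hp Hd (S N) r1 Hr1) as [d1 [Hd1 Hf]].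
    destruct (bwd m a b p q w Hp Hd (S N) r2 Hr2) as [d2 [Hd2 Hb]].
    exists (Rmin d0 (Rmin d1 d2)). split.
    { apply Rmin_pos; auto. apply Rmin_pos; auto. }
    intros p' q' w' Hd' Hpp n Hn.
    pose proof (Rmin_l d0 (Rmin d1 d2)). pose proof (Rmin_r d0 (Rmin d1 d2)).
    pose proof (Rmin_l d1 d2). pose proof (Rmin_r d1 d2).
    destruct (Z_le_gt_dec (Z.abs n) (Z.of_nat N)).
    + apply (H0 p' q'); auto. lra.
    + destruct (Z_le_gt_dec 0 n).
      * assert (n = Z.of_nat (S N)) by lia. subst n. apply (Hc1 p' q' w' Hd'). apply (Hf p' q' w' Hd'). lra.
      * assert (n = (- Z.of_nat (S N))%Z) by lia. subst n. apply (Hc2 p' q' w' Hd'). apply (Hb p' q' w' Hd'). lra.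
Qed.

Lemma sumZ_shift g k : sumZ g (S k) = (g 0%nat + sumZ (fun j => g (S j)) k)%Z.
Proof.
  induction k as [|k IH]; simpl in *; [lia|]. rewrite IH. lia.
Qed.

Lemma sumZ_ext g h k : (forall j, (j < k)%nat -> g j = h j) -> sumZ g k = sumZ h k.
Proof.
  induction k as [|k IH]; intros E; simpl; auto.
  rewrite IH by (intros; apply E; lia). rewrite (E k) by lia. reflexivity.
Qed.

Lemma H_succ W k : H W (Z.of_nat (S k)) = (H W (Z.of_nat k) + sgnD (W (Z.of_nat k)))%Z.
Proof.
  unfold H. rewrite !(proj2 (Z.leb_le _ _)) by lia. rewrite !Nat2Z.id. reflexivity.
Qed.

Lemma H_neg W k : H W (- Z.of_nat k)%Z =
  (- sumZ (fun j => sgnD (W (- Z.of_nat k + Z.of_nat j)%Z)) k)%Z.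
Proof.
  destruct k as [|k].
  - reflexivity.
  - unfold H. rewrite (proj2 (Z.leb_gt _ _)) by lia.
    rewrite Z.opp_involutive, Nat2Z.id. reflexivity.
Qed.

Lemma H_negsucc W k : H W (- Z.of_nat (S k))%Z =
  (H W (- Z.of_nat k)%Z - sgnD (W (- Z.of_nat (S k))%Z))%Z.
Proof.
  rewrite !H_neg, sumZ_shift.
  rewrite (sumZ_ext _ (fun j => sgnD (W (- Z.of_nat k + Z.of_nat j)%Z))).
  - simpl (Z.of_nat 0). rewrite Z.add_0_r. lia.
  - intros j _. do 2 f_equal. lia.
Qed.

Lemma sgn_kappa m i : sgnD (kappa m i) = if Nat.leb i m then 1%Z else (-1)%Z.
Proof. unfold kappa. destruct (Nat.leb i m); reflexivity. Qed.

Lemma Rp_succ M x : 0 < M -> Rpower M (x + 1) = Rpower M x * M.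
Proof.
  intros HM. unfold Rpower. rewrite Rmult_plus_distr_r, exp_plus, Rmult_1_l, exp_ln; auto.
Qed.

Lemma Rp_pred M x : 0 < M -> Rpower M (x - 1) = Rpower M x / M.
Proof.
  intros HM. replace (Rpower M x) with (Rpower M (x - 1 + 1)) by (f_equal; ring).
  rewrite Rp_succ by auto. field. lra.
Qed.

Lemma Rp_pos M x : 0 < Rpower M x.
Proof. unfold Rpower. apply exp_pos. Qed.


Definition agree (w w' : Z -> nat) (N : nat) := forall n, (Z.abs n <= Z.of_nat N)%Z -> w' n = w n.

Lemma step_same m a b p q w p' q' w' n : params m a b -> dat m a b p q w -> dat m a b p' q' w' ->
  w' n = w n -> q (n + 1)%Z = f_piece m a b (w n) (q n) /\ q' (n + 1)%Z = f_piece m a b (w n) (q' n).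
Proof.
  intros Hp [Ho [_ Hn]] [Ho' [_ Hn']] E. destruct (Hn n), (Hn' n).
  split; [apply orbit_step; auto|]. rewrite <- E. apply orbit_step; auto.
Qed.

Lemma xfwd m a b p q w p' q' w' N : params m a b -> dat m a b p q w -> dat m a b p' q' w' ->
  agree w w' N -> forall k, (k <= N)%nat ->
  Rabs (px (q 0%Z) - px (q' 0%Z)) <=
  (1 - (INR m - 1) * a) ^ k * Rabs (px (q (Z.of_nat k)) - px (q' (Z.of_nat k))).
Proof.
  intros Hp Hd Hd' Ha. pose proof (params_M _ _ _ Hp) as HM.
  induction k as [|k IH]; intros Hk.
  - simpl. lra.
  - assert (E : w' (Z.of_nat k) = w (Z.of_nat k)) by (apply Ha; lia).
    destruct (step_same m a b p q w p' q' w' _ Hp Hd Hd' E) as [E1 E2].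
    replace (Z.of_nat (S k)) with (Z.of_nat k + 1)%Z by lia. rewrite E1, E2.
    destruct (f_diff m a b (w (Z.of_nat k)) (q (Z.of_nat k)) (q' (Z.of_nat k)) Hp) as [Dx _].
    rewrite Dx. specialize (IH ltac:(lia)).
    destruct (params_nz _ _ _ Hp) as [Ha0 [_ [_ [HMa0 _]]]].
    destruct Hp as [_ [Hpa [HMa _]]].
    assert (Hc : Rabs (cx m a (w (Z.of_nat k))) * (1 - (INR m - 1) * a) >= 1).
    { unfold cx. destruct (Nat.leb _ _); rewrite Rabs_pos_eq.
      - apply Rle_ge. apply Rmult_le_reg_l with a; [lra|]. rewrite <- Rmult_assoc, Rinv_r; nra.
      - apply Rlt_le, Rinv_0_lt_compat; lra.
      - apply Rle_ge. apply Rmult_le_reg_l with (1 - INR m * a); [lra|].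
        rewrite <- Rmult_assoc, Rinv_r; nra.
      - apply Rlt_le, Rinv_0_lt_compat; lra. }
    rewrite Rabs_mult. simpl.
    set (D := Rabs (px (q (Z.of_nat k)) - px (q' (Z.of_nat k)))) in *.
    set (C := Rabs (cx m a (w (Z.of_nat k)))) in *.
    set (c := 1 - (INR m - 1) * a) in *.
    assert (0 < c ^ k) by (apply pow_lt; unfold c; nra).
    assert (0 <= D) by apply Rabs_pos.
    assert (0 <= C) by apply Rabs_pos.
    apply Rle_trans with (c ^ k * D); auto.
    replace (c * c ^ k * (C * D)) with (c ^ k * ((C * c) * D)) by ring.
    apply Rmult_le_compat_l; [lra|]. nra.
Qed.

Lemma zbwd m a b p q w p' q' w' N : params m a b -> dat m a b p q w -> dat m a b p' q' w' ->
  agree w w' N -> forall k, (k <= N)%nat ->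
  Rabs (pz (q 0%Z) - pz (q' 0%Z)) <=
  (1 - (INR m - 1) * b) ^ k * Rabs (pz (q (- Z.of_nat k)%Z) - pz (q' (- Z.of_nat k)%Z)).
Proof.
  intros Hp Hd Hd' Ha. pose proof (params_M _ _ _ Hp) as HM.
  induction k as [|k IH]; intros Hk.
  - simpl. lra.
  - set (n1 := (- Z.of_nat (S k))%Z).
    assert (E : w' n1 = w n1) by (apply Ha; unfold n1; lia).
    destruct (step_same m a b p q w p' q' w' _ Hp Hd Hd' E) as [E1 E2].
    replace (n1 + 1)%Z with (- Z.of_nat k)%Z in E1, E2 by (unfold n1; lia).
    specialize (IH ltac:(lia)). rewrite E1, E2 in IH.
    destruct (f_diff m a b (w n1) (q n1) (q' n1) Hp) as [_ [_ Dz]].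
    rewrite Dz in IH.
    destruct Hp as [_ [Hpa [HMa [Hb HMb]]]].
    assert (Hc : Rabs (cz m b (w n1)) <= 1 - (INR m - 1) * b).
    { unfold cz. destruct (Nat.leb _ _); rewrite Rabs_pos_eq; nra. }
    rewrite Rabs_mult in IH. simpl.
    set (D := Rabs (pz (q n1) - pz (q' n1))) in *.
    set (C := Rabs (cz m b (w n1))) in *.
    set (c := 1 - (INR m - 1) * b) in *.
    assert (0 < c ^ k) by (apply pow_lt; unfold c; nra).
    assert (0 <= D) by apply Rabs_pos.
    apply Rle_trans with (c ^ k * (C * D)); auto.
    replace (c * c ^ k * D) with (c ^ k * (c * D)) by ring.
    apply Rmult_le_compat_l; [lra|]. nra.
Qed.

Lemma yfwd m a b p q w p' q' w' N : params m a b -> dat m a b p q w -> dat m a b p' q' w' ->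
  agree w w' N -> forall k, (k <= N)%nat ->
  py (q 0%Z) - py (q' 0%Z) =
  Rpower (INR m) (IZR (H (fun n => kappa m (w n)) (Z.of_nat k))) *
    (py (q (Z.of_nat k)) - py (q' (Z.of_nat k))).
Proof.
  intros Hp Hd Hd' Ha. pose proof (params_M _ _ _ Hp) as HM.
  induction k as [|k IH]; intros Hk.
  - simpl. unfold H. simpl. unfold Rpower. rewrite Rmult_0_l, exp_0. ring.
  - assert (E : w' (Z.of_nat k) = w (Z.of_nat k)) by (apply Ha; lia).
    destruct (step_same m a b p q w p' q' w' _ Hp Hd Hd' E) as [E1 E2].
    rewrite H_succ. cbv beta. rewrite sgn_kappa.
    replace (Z.of_nat (S k)) with (Z.of_nat k + 1)%Z by lia. rewrite E1, E2.
    destruct (f_diff m a b (w (Z.of_nat k)) (q (Z.of_nat k)) (q' (Z.of_nat k)) Hp) as [_ [Dy _]].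
    rewrite Dy. rewrite IH by lia. unfold cy.
    destruct (Nat.leb _ _).
    + rewrite plus_IZR, Rp_succ by lra. field; lra.
    + replace (H (fun n => kappa m (w n)) (Z.of_nat k) + -1)%Z
        with (H (fun n => kappa m (w n)) (Z.of_nat k) - 1)%Z by lia.
      rewrite minus_IZR, Rp_pred by lra. field; lra.
Qed.

Lemma ybwd m a b p q w p' q' w' N : params m a b -> dat m a b p q w -> dat m a b p' q' w' ->
  agree w w' N -> forall k, (k <= N)%nat ->
  py (q 0%Z) - py (q' 0%Z) =
  Rpower (INR m) (IZR (H (fun n => kappa m (w n)) (- Z.of_nat k)%Z)) *
    (py (q (- Z.of_nat k)%Z) - py (q' (- Z.of_nat k)%Z)).
Proof.
  intros Hp Hd Hd' Ha. pose proof (params_M _ _ _ Hp) as HM.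
  induction k as [|k IH]; intros Hk.
  - simpl. unfold H. simpl. unfold Rpower. rewrite Rmult_0_l, exp_0. ring.
  - set (n1 := (- Z.of_nat (S k))%Z).
    assert (E : w' n1 = w n1) by (apply Ha; unfold n1; lia).
    destruct (step_same m a b p q w p' q' w' _ Hp Hd Hd' E) as [E1 E2].
    replace (n1 + 1)%Z with (- Z.of_nat k)%Z in E1, E2 by (unfold n1; lia).
    specialize (IH ltac:(lia)). rewrite E1, E2 in IH.
    destruct (f_diff m a b (w n1) (q n1) (q' n1) Hp) as [_ [Dy _]].
    rewrite Dy in IH. rewrite IH. unfold n1. rewrite H_negsucc. cbv beta. rewrite sgn_kappa.
    fold n1. unfold cy.
    destruct (Nat.leb _ _).
    + rewrite minus_IZR, Rp_pred by lra. field; lra.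
    + replace (H (fun n => kappa m (w n)) (- Z.of_nat k) - -1)%Z
        with (H (fun n => kappa m (w n)) (- Z.of_nat k) + 1)%Z by lia.
      rewrite plus_IZR, Rp_succ by lra. field; lra.
Qed.

Lemma kappa_inj m i j : (1 <= i <= 2 * m)%nat -> (1 <= j <= 2 * m)%nat ->
  kappa m i = kappa m j -> i = j.
Proof.
  intros Hi Hj. unfold kappa.
  destruct (Nat.leb i m) eqn:E1; destruct (Nat.leb j m) eqn:E2; intros Hk; inversion Hk; auto.
  apply Nat.leb_gt in E1. apply Nat.leb_gt in E2. lia.
Qed.

Lemma Rp_small M h e : 1 < M -> 0 < e -> IZR h < ln e / ln M -> Rpower M (IZR h) < e.
Proof.
  intros HM He Hh. assert (HlM : 0 < ln M) by (rewrite <- ln_1; apply ln_increasing; lra).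
  unfold Rpower. rewrite <- (exp_ln e) by lra. apply exp_increasing.
  apply (Rmult_lt_compat_r (ln M)) in Hh; auto.
  replace (ln e / ln M * ln M) with (ln e) in Hh by (field; lra). exact Hh.
Qed.

Lemma ychoose m W e : 2 <= INR m -> A_set m W -> 0 < e ->
  exists k : nat, Rpower (INR m) (IZR (H W (Z.of_nat k))) < e \/
                  Rpower (INR m) (IZR (H W (- Z.of_nat k)%Z)) < e.
Proof.
  intros HM [_ [Hf | Hb]] He.
  - set (u := fun n => IZR (H W (Z.of_nat n))) in Hf.
    destruct (ex_LimInf_seq u) as [l Hl].
    rewrite (is_LimInf_seq_unique u l Hl) in Hf. subst l.
    destruct (Hl (ln e / ln (INR m)) 0%nat) as [k [_ Hk]].
    exists k. left. apply Rp_small; auto. lra.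
  - set (u := fun n => IZR (H W (- Z.of_nat n)%Z)) in Hb.
    destruct (ex_LimInf_seq u) as [l Hl].
    rewrite (is_LimInf_seq_unique u l Hl) in Hb. subst l.
    destruct (Hl (ln e / ln (INR m)) 0%nat) as [k [_ Hk]].
    exists k. right. apply Rp_small; auto. lra.
Qed.

Lemma dat_bounds m a b p q w : params m a b -> dat m a b p q w -> forall n,
  0 <= px (q n) <= 1 /\ 0 <= py (q n) <= 1 /\ 0 <= pz (q n) <= 1.
Proof.
  intros Hp [_ [_ Hn]] n. destruct (Hn n) as [Hw Hi].
  apply (Omega_bounds m a b (w n)); auto. apply int_mem; auto.
Qed.

Lemma inv_est m a b p q w : params m a b -> dat m a b p q w ->
  A_set m (fun n => kappa m (w n)) -> forall e, 0 < e ->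
  exists N, forall p' q' w', dat m a b p' q' w' -> agree w w' N -> cls e p p'.
Proof.
  intros Hp Hd HA e He. pose proof (params_M _ _ _ Hp) as HM.
  pose proof Hp as Hp'. destruct Hp' as [_ [Ha [HMa [Hb HMb]]]].
  set (c := 1 - (INR m - 1) * a). set (d := 1 - (INR m - 1) * b).
  assert (Hc : Rabs c < 1) by (unfold c; rewrite Rabs_pos_eq; nra).
  assert (Hdd : Rabs d < 1) by (unfold d; rewrite Rabs_pos_eq; nra).
  assert (Hc0 : 0 < c) by (unfold c; nra). assert (Hd0 : 0 < d) by (unfold d; nra).
  destruct (pow_lt_1_zero c Hc e He) as [Nx HNx].
  destruct (pow_lt_1_zero d Hdd e He) as [Nz HNz].
  destruct (ychoose m _ e HM HA He) as [k Hk].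
  exists (Nx + Nz + k)%nat. intros p' q' w' Hd' Hag.
  pose proof Hd as [_ [H0 _]]. pose proof Hd' as [_ [H0' _]].
  rewrite <- H0, <- H0'.
  set (N := (Nx + Nz + k)%nat) in *.
  unfold cls. repeat split.
  - pose proof (xfwd m a b p q w p' q' w' N Hp Hd Hd' Hag N (le_n _)) as Hx.
    fold c in Hx.
    destruct (dat_bounds m a b p q w Hp Hd (Z.of_nat N)) as [B1 _].
    destruct (dat_bounds m a b p' q' w' Hp Hd' (Z.of_nat N)) as [B2 _].
    assert (HR : Rabs (px (q (Z.of_nat N)) - px (q' (Z.of_nat N))) <= 1) by (apply Rabs_le; lra).
    specialize (HNx N ltac:(unfold N; lia)). rewrite Rabs_pos_eq in HNx by (apply pow_le; lra).
    assert (0 < c ^ N) by (apply pow_lt; lra). nra.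
  - destruct Hk as [Hk | Hk].
    + pose proof (yfwd m a b p q w p' q' w' N Hp Hd Hd' Hag k ltac:(unfold N; lia)) as Hy.
      rewrite Hy, Rabs_mult, (Rabs_pos_eq (Rpower _ _)) by (apply Rlt_le, Rp_pos).
      destruct (dat_bounds m a b p q w Hp Hd (Z.of_nat k)) as [_ [B1 _]].
      destruct (dat_bounds m a b p' q' w' Hp Hd' (Z.of_nat k)) as [_ [B2 _]].
      assert (HR : Rabs (py (q (Z.of_nat k)) - py (q' (Z.of_nat k))) <= 1) by (apply Rabs_le; lra).
      pose proof (Rp_pos (INR m) (IZR (H (fun n => kappa m (w n)) (Z.of_nat k)))).
      pose proof (Rabs_pos (py (q (Z.of_nat k)) - py (q' (Z.of_nat k)))). nra.
    + pose proof (ybwd m a b p q w p' q' w' N Hp Hd Hd' Hag k ltac:(unfold N; lia)) as Hy.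
      rewrite Hy, Rabs_mult, (Rabs_pos_eq (Rpower _ _)) by (apply Rlt_le, Rp_pos).
      destruct (dat_bounds m a b p q w Hp Hd (- Z.of_nat k)%Z) as [_ [B1 _]].
      destruct (dat_bounds m a b p' q' w' Hp Hd' (- Z.of_nat k)%Z) as [_ [B2 _]].
      assert (HR : Rabs (py (q (- Z.of_nat k)%Z) - py (q' (- Z.of_nat k)%Z)) <= 1) by (apply Rabs_le; lra).
      pose proof (Rp_pos (INR m) (IZR (H (fun n => kappa m (w n)) (- Z.of_nat k)%Z))).
      pose proof (Rabs_pos (py (q (- Z.of_nat k)%Z) - py (q' (- Z.of_nat k)%Z))). nra.
  - pose proof (zbwd m a b p q w p' q' w' N Hp Hd Hd' Hag N (le_n _)) as Hz.
    fold d in Hz.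
    destruct (dat_bounds m a b p q w Hp Hd (- Z.of_nat N)%Z) as [_ [_ B1]].
    destruct (dat_bounds m a b p' q' w' Hp Hd' (- Z.of_nat N)%Z) as [_ [_ B2]].
    assert (HR : Rabs (pz (q (- Z.of_nat N)%Z) - pz (q' (- Z.of_nat N)%Z)) <= 1) by (apply Rabs_le; lra).
    specialize (HNz N ltac:(unfold N; lia)). rewrite Rabs_pos_eq in HNz by (apply pow_le; lra).
    assert (0 < d ^ N) by (apply pow_lt; lra). nra.
Qed.

Lemma small_zero x : (forall e, 0 < e -> Rabs x < e) -> x = 0.
Proof.
  intros H. destruct (Req_dec x 0) as [|Hx]; auto.
  assert (0 < Rabs x) by (apply Rabs_pos_lt; auto). specialize (H _ H0). lra.
Qed.

Theorem lemma3p1 (m : nat) (a b : R) :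
  (2 <= m)%nat ->
  0 < a < 1 / INR m ->
  0 < b < 1 / INR m ->
  homeo_onto_image
    (fun p => X m a b p /\ A_set m (pibar m a b p))
    (pibar m a b).
Proof.
  intros Hm [Ha Ha'] [Hb Hb'].
  assert (HM : 2 <= INR m) by (apply le_INR in Hm; simpl in Hm; lra).
  assert (Hp : params m a b).
  { repeat split; auto.
    - apply (Rmult_lt_compat_l (INR m)) in Ha'; [|lra].
      replace (INR m * (1 / INR m)) with 1 in Ha' by (field; lra). exact Ha'.
    - apply (Rmult_lt_compat_l (INR m)) in Hb'; [|lra].
      replace (INR m * (1 / INR m)) with 1 in Hb' by (field; lra). exact Hb'. }
  assert (Hag : forall p p' q q' N, dat m a b p q (pi_ab m a b p) ->
            dat m a b p' q' (pi_ab m a b p') ->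
            (forall n, (Z.abs n <= Z.of_nat N)%Z -> pibar m a b p' n = pibar m a b p n) ->
            agree (pi_ab m a b p) (pi_ab m a b p') N).
  { intros p p' q q' N [_ [_ Hn]] [_ [_ Hn']] H n Hn0.
    apply kappa_inj with m; [apply Hn' | apply Hn |]. apply H; auto. }
  split; [|split].
  - intros p p' [HX HA] [HX' HA'] Heq.
    destruct (X_dat m a b p HX) as [q Hd]. destruct (X_dat m a b p' HX') as [q' Hd'].
    assert (Hc : forall e, 0 < e -> cls e p p').
    { intros e He. destruct (inv_est m a b p q _ Hp Hd HA e He) as [N HN].
      apply (HN p' q' (pi_ab m a b p') Hd'). apply (Hag p p' q q' N Hd Hd').
      intros n _. symmetry. apply Heq. }
    assert (E1 : px p - px p' = 0) by (apply small_zero; intros e He; apply (Hc e He)).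
    assert (E2 : py p - py p' = 0) by (apply small_zero; intros e He; apply (Hc e He)).
    assert (E3 : pz p - pz p' = 0) by (apply small_zero; intros e He; apply (Hc e He)).
    destruct p as [x1 y1 z1], p' as [x2 y2 z2]; simpl in *. f_equal; lra.
  - intros p [HX HA] N. destruct (X_dat m a b p HX) as [q Hd].
    destruct (codes m a b p q _ Hp Hd N) as [d [Hd0 Hc]].
    exists d. split; auto. intros p' [HX' _] Hpp n Hn.
    destruct (X_dat m a b p' HX') as [q' Hd'].
    unfold pibar. rewrite (Hc p' q' (pi_ab m a b p') Hd' Hpp n Hn). reflexivity.
  - intros p [HX HA] e He. destruct (X_dat m a b p HX) as [q Hd].
    assert (He3 : 0 < e / 3) by lra.
    destruct (inv_est m a b p q _ Hp Hd HA _ He3) as [N HN].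
    exists N. intros p' [HX' _] Hpp.
    destruct (X_dat m a b p' HX') as [q' Hd'].
    apply dist_close. apply (HN p' q' (pi_ab m a b p') Hd').
    apply (Hag p p' q q' N Hd Hd' Hpp).
Qed.
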